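(* Let $X$ be a real Banach space, $k\in\mathbb N$, and $Y$ a proximinal closed subspace of $X$. Then $Y$ is a $k$-Chebyshev subspace of $X$ if and only if $\dim\big(\{S(X,y^\perp)-x\}\cap Y\big)<k$ for all $y^\perp\in S_{Y^\perp}$ and all $x\in S(X,y^\perp)$.
   Context: For $x^*\in X^*\setminus\{0\}$, $S(X,x^* )=\{x\in S_X:x^*(x)=\|x^*\|\}$, and $S(X,x^* )-x=\{z-x:z\in S(X,x^* )\}$. $Y^\perp=\{x^*\in X^*:x^*|_Y=0\}$ and $S_{Y^\perp}$ its unit sphere. For a set $A$ and $a\in A$, $\dim A=\dim\operatorname{span}(A-a)$. $Y$ is proximinal if $P_Y(x)=\{y\in Y:\|x-y\|=d(x,Y)\}\neq\emptyset$ for all $x\in X$; a proximinal $Y$ is $k$-Chebyshev if $\dim P_Y(x)\le k-1$ for all $x\in X$. *)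

(* Defs.v *)
(* a real Banach space is a completeNormedModType
   over an abstract R : realType. *)
From HB Require Import structures.
From mathcomp Require Import all_boot all_order all_algebra.
From mathcomp Require Import all_classical all_reals all_analysis.
Set Implicit Arguments. Unset Strict Implicit. Unset Printing Implicit Defensive.
Import Order.TTheory GRing.Theory Num.Theory.
Import numFieldNormedType.Exports.
Local Open Scope classical_set_scope.
Local Open Scope ring_scope.

Section Defs.
Context {R : realType} {X : normedModType R}.

Definition is_subspace (Y : set X) : Prop :=
  Y 0 /\ forall (a : R) (x y : X), Y x -> Y y -> Y (a *: x + y).

Definition is_linfun (f : X -> R) : Prop :=
  forall (a : R) (x y : X), f (a *: x + y) = a * f x + f y.

Definition in_dual (f : X -> R) : Prop := is_linfun f /\ continuous f.

Definition dual_norm (f : X -> R) : R :=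
  sup [set `|f x| | x in [set x : X | `|x| <= 1]].

Definition unit_sphere : set X := [set x | `|x| = 1].

Definition Sface (f : X -> R) : set X :=
  [set x | unit_sphere x /\ f x = dual_norm f].

Definition set_shift (A : set X) (x : X) : set X := [set z - x | z in A].

Definition annihilator (Y : set X) : set (X -> R) :=
  [set f | in_dual f /\ forall y, Y y -> f y = 0].

Definition annihilator_sphere (Y : set X) : set (X -> R) :=
  [set f | annihilator Y f /\ dual_norm f = 1].

Definition lspan (S : set X) : set X :=
  [set v | exists (n : nat) (c : 'I_n -> R) (u : 'I_n -> X),
      (forall i, S (u i)) /\ v = \sum_(i < n) c i *: u i].

Definition lin_indep (n : nat) (u : 'I_n -> X) : Prop :=
  forall c : 'I_n -> R, \sum_(i < n) c i *: u i = 0 -> forall i, c i = 0.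

(* dim V < k for the linear span V of S: every linearly independent finite
   family in V has fewer than k elements (covers infinite dimension). *)
Definition span_dim_lt (S : set X) (k : nat) : Prop :=
  forall (n : nat) (u : 'I_n -> X),
    (forall i, lspan S (u i)) -> lin_indep u -> (n < k)%N.

(* dim A := dim span(A - a) for a in A (independent of a) *)
Definition set_dim_lt (A : set X) (k : nat) : Prop :=
  forall a, A a -> span_dim_lt (set_shift A a) k.

Definition dist_to (Y : set X) (x : X) : R := inf [set `|x - y| | y in Y].

Definition metric_proj (Y : set X) (x : X) : set X :=
  [set y | Y y /\ `|x - y| = dist_to Y x].

Definition proximinal (Y : set X) : Prop :=
  forall x, metric_proj Y x !=set0.

(* k-Chebyshev: proximinal and dim P_Y(x) <= k - 1, i.e. dim P_Y(x) < k *)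
Definition k_Chebyshev (Y : set X) (k : nat) : Prop :=
  proximinal Y /\ forall x, set_dim_lt (metric_proj Y x) k.

End Defs.

(* Main.v *)
Require Import Defs.
From HB Require Import structures.
From mathcomp Require Import all_boot all_order all_algebra.
From mathcomp Require Import all_classical all_reals all_analysis.
From mathcomp Require Import lra ring.
Set Implicit Arguments. Unset Strict Implicit. Unset Printing Implicit Defensive.
Import Order.TTheory GRing.Theory Num.Theory.
Import numFieldNormedType.Exports.
Local Open Scope classical_set_scope.
Local Open Scope ring_scope.

Section Aux.
Context {R : realType} {X : normedModType R}.
Implicit Types (f : X -> R) (Y : set X).

Lemma lin0 f : is_linfun f -> f 0 = 0.
Proof. move=> H; have := H 1 0 0; rewrite scaler0 addr0 mul1r; lra. Qed.

Lemma linZ f a x : is_linfun f -> f (a *: x) = a * f x.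
Proof. move=> H; have := H a x 0; rewrite addr0 (lin0 H) addr0 //. Qed.

Lemma linD f x y : is_linfun f -> f (x + y) = f x + f y.
Proof. move=> H; have := H 1 x y; rewrite scale1r mul1r //. Qed.

Lemma linB f x y : is_linfun f -> f (x - y) = f x - f y.
Proof. move=> H; rewrite (linD _ _ H) -scaleN1r (linZ _ _ H); lra. Qed.

Lemma subZ Y a x : is_subspace Y -> Y x -> Y (a *: x).
Proof. by move=> [Y0 HY] Yx; have := HY a x 0 Yx Y0; rewrite addr0. Qed.

Lemma subD Y x y : is_subspace Y -> Y x -> Y y -> Y (x + y).
Proof. by move=> [Y0 HY] Yx Yy; have := HY 1 x y Yx Yy; rewrite scale1r. Qed.

Lemma subN Y x : is_subspace Y -> Y x -> Y (- x).
Proof. by move=> HY Yx; rewrite -scaleN1r; apply: subZ. Qed.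

Lemma subB Y x y : is_subspace Y -> Y x -> Y y -> Y (x - y).
Proof. by move=> HY Yx Yy; apply: subD => //; apply: subN. Qed.

Lemma dual_unit_bound f : in_dual f ->
  exists M, forall x, `|x| <= 1 -> `|f x| <= M.
Proof.
move=> [lf cf].
have := @cvgr_dist_lt _ _ _ (nbhs (0:X)) (nbhs_filter (0:X)) f (f 0) (cf 0) 1 ltr01.
rewrite (lin0 lf) => H0.
have [d /= d0 Hd] := (iffLR (nbhs_normP (0:X) _)) H0.
exists (2 / d) => x x1.
have : `|f ((d / 2) *: x)| < 1.
  have := Hd ((d / 2) *: x); rewrite /= !sub0r !normrN; apply.
  rewrite normrZ.
  rewrite (@le_lt_trans _ _ (`|d/2| * 1)) //.
    by rewrite ler_wpM2l.
  rewrite mulr1 ger0_norm; last by rewrite divr_ge0 // ltW.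
  by rewrite ltr_pdivrMr // ltr_pMr // ltr1n.
rewrite (linZ _ _ lf) normrM ger0_norm; last by rewrite divr_ge0 // ltW.
move=> h; rewrite ler_pdivlMr // mulrC; apply: ltW.
lra.
Qed.

Lemma dual_le_norm f x : in_dual f -> `|x| <= 1 -> `|f x| <= dual_norm f.
Proof.
move=> hf x1; have [M HM] := dual_unit_bound hf.
apply: ub_le_sup; last by exists x.
by exists M => _ [y y1 <-]; apply: HM.
Qed.

Lemma dual_bound f v : in_dual f -> `|f v| <= dual_norm f * `|v|.
Proof.
move=> hf; have [->|v0] := eqVneq v 0.
  by rewrite (lin0 hf.1) !normr0 mulr0.
have nv : 0 < `|v| by rewrite normr_gt0.
have := @dual_le_norm f (`|v|^-1 *: v) hf.
rewrite normrZ normfV normr_id mulVf ?normr_eq0 // lexx => /(_ isT).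
rewrite (linZ _ _ hf.1) normrM normfV normr_id ler_pdivrMl //.
by rewrite mulrC.
Qed.

Lemma dual_norm_one f v0 : (forall v, `|f v| <= `|v|) -> `|v0| = 1 -> f v0 = 1 ->
  dual_norm f = 1.
Proof.
move=> hb n1 f1; apply/eqP; rewrite eq_le; apply/andP; split.
  apply: ge_sup; first by exists `|f v0|, v0 => //=; rewrite n1.
  by move=> _ [y y1 <-]; apply: le_trans (hb y) y1.
rewrite -{1}f1 -[X in X <= _]ger0_norm ?f1 // -{1}f1.
apply: ub_le_sup; last by exists v0 => //=; rewrite n1.
by exists 1 => _ [y y1 <-]; apply: le_trans (hb y) y1.
Qed.

Lemma bound_cont f : is_linfun f -> (forall v, `|f v| <= `|v|) -> continuous f.
Proof.
move=> lf b x; apply/cvgrPdist_lt => e e0.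
near=> y.
rewrite -(linB _ _ lf); apply: (le_lt_trans (b _)).
near: y.
exact: (@cvgr_dist_lt _ _ _ (nbhs x) (nbhs_filter x) id x (@cvg_id _ (nbhs x)) e e0).
Unshelve. all: by end_near.
Qed.

Lemma span_transfer (S T : set X) (c : R) k :
  (forall s, S s -> exists t, T t /\ s = c *: t) ->
  span_dim_lt T k -> span_dim_lt S k.
Proof.
move=> ST hT n u hu li; apply: (hT n u) => // i.
have [m [cc [w [Sw ->]]]] := hu i.
pose wt j := sval (cid (ST (w j) (Sw j))).
have Hwt : forall j, T (wt j) /\ w j = c *: wt j.
  by move=> j; exact: (svalP (cid (ST (w j) (Sw j)))).
exists m, (fun j => cc j * c), wt; split.
  by move=> j; case: (Hwt j).
apply: eq_bigr => j _; case: (Hwt j) => _ ->; by rewrite scalerA.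
Qed.

Lemma span_dim_zero k : (1 <= k)%N -> span_dim_lt [set 0 : X] k.
Proof.
move=> k1 [|n] u hu li //.
have u0 : forall i, u i = 0.
  move=> i; have [m [c [w [Sw ->]]]] := hu i.
  by apply: big1 => j _; rewrite (Sw j) scaler0.
have := li (fun _ => 1); rewrite big1; last by move=> i _; rewrite u0 scaler0.
by move=> /(_ erefl ord0) /eqP; rewrite oner_eq0.
Qed.

Lemma grp1 (a b c : X) : a - c - (b - c) = a - b.
Proof. by rewrite opprB addrA subrK. Qed.

Lemma grp2 (a b c : X) : (c - b) - (c - a) = a - b.
Proof. by rewrite opprB addrC addrA subrK. Qed.

Lemma lin_eq_aux (u u' v : X) t t' :
  u + t *: v = u' + t' *: v -> (t - t') *: v = u' - u.
Proof.
move=> E; rewrite scalerBl -[t *: v](addKr u) E.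
by rewrite addrA addrK addrC.
Qed.

End Aux.
Section HB.
Context {R : realType} {X : normedModType R}.

Definition good (G : set (X * R)) : Prop :=
  [/\ G (0, 0),
      (forall v r s, G (v, r) -> G (v, s) -> r = s),
      (forall a u v r s, G (u, r) -> G (v, s) -> G (a *: u + v, a * r + s)) &
      (forall v r, G (v, r) -> r <= `|v|)].

Lemma goodZ G a u r : good G -> G (u, r) -> G (a *: u, a * r).
Proof.
by case=> G0 _ Gl _ Gu; have := Gl a u 0 r 0 Gu G0; rewrite !addr0.
Qed.

Lemma good_union H : H (0, 0) ->
  (forall p q, H p -> H q -> exists G, [/\ good G, G `<=` H, G p & G q]) ->
  good H.
Proof.
move=> H0 hyp; split => //.
- move=> v r s Hr Hs; have [G [[_ Gf _ _] _ Gp Gq]] := hyp _ _ Hr Hs.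
  exact: Gf Gp Gq.
- move=> a u v r s Hr Hs; have [G [[_ _ Gl _] GH Gp Gq]] := hyp _ _ Hr Hs.
  exact/GH/Gl.
- move=> v r Hr; have [G [[_ _ _ Gd] _ Gp _]] := hyp _ _ Hr Hr.
  exact: Gd Gp.
Qed.

Definition ext (G : set (X * R)) (v : X) (c : R) : set (X * R) :=
  [set p | exists u r t, G (u, r) /\ p = (u + t *: v, r + t * c)].

Lemma ext_sub G v c : G `<=` ext G v c.
Proof.
case=> u r Gu; exists u, r, 0; split => //.
by rewrite scale0r mul0r !addr0.
Qed.

Lemma ext_new G v c : good G -> ext G v c (v, c).
Proof.
case=> G0 _ _ _; exists 0, 0, 1; split => //.
by rewrite scale1r mul1r !add0r.
Qed.

Lemma ext_good G v : good G -> (forall r, ~ G (v, r)) ->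
  exists c, good (ext G v c).
Proof.
move=> gG nv; case: (gG) => G00 Gfun Glin Gdom.
pose A := [set z | exists u r, G (u, r) /\ z = r - `|u - v|].
have key : forall u r w s, G (u, r) -> G (w, s) -> r - `|u - v| <= `|w + v| - s.
  move=> u r w s Gu Gw.
  have := Gdom _ _ (Glin 1 u w r s Gu Gw); rewrite scale1r mul1r => h.
  have := ler_normD (u - v) (w + v).
  have -> : u - v + (w + v) = u + w by rewrite addrCA subrK addrC.
  lra.
pose c := sup A.
have Aub : forall w s, G (w, s) -> ubound A (`|w + v| - s).
  by move=> w s Gw _ [u [r [Gu ->]]]; exact: key.
have hasub : has_ubound A by exists (`|0 + v| - 0); exact: Aub.
have cge : forall u r, G (u, r) -> r - `|u - v| <= c.
  by move=> u r Gu; apply: ub_le_sup => //; exists u, r.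
have cle : forall w s, G (w, s) -> c <= `|w + v| - s.
  move=> w s Gw; apply: ge_sup; last exact: Aub.
  by exists (0 - `|0 - v|), 0, 0.
exists c; split.
- by exists 0, 0, 0; split => //; rewrite scale0r mul0r !addr0.
- move=> p r1 r2 [u [r [t [Gu e1]]]] [u' [r' [t' [Gu' e2]]]].
  case: e1 => ep er; case: e2 => ep' er'.
  have E : u + t *: v = u' + t' *: v by rewrite -ep -ep'.
  have tt : t = t'.
    case: (eqVneq t t') => [//|ne]; exfalso.
    have E2 : (t - t') *: v = u' - u.
      rewrite scalerBl -[t *: v](addKr u) E.
      by rewrite addrA addrK addrC.
    have Gd : G (u' - u, r' - r).
      have := Glin (-1) u u' r r' Gu Gu'.
      by rewrite scaleN1r mulN1r addrC [- r + _]addrC.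
    have := goodZ ((t - t')^-1) gG Gd.
    rewrite -E2 scalerA mulVf ?scale1r ?subr_eq0 //.
    exact: nv.
  subst t'.
  have eu : u = u' by apply: (addIr (t *: v)).
  subst u'.
  by rewrite er er' (Gfun _ _ _ Gu Gu').
- move=> a p q r1 r2 [u [r [t [Gu e1]]]] [u' [r' [t' [Gu' e2]]]].
  case: e1 => -> ->; case: e2 => -> ->.
  exists (a *: u + u'), (a * r + r'), (a * t + t'); split; first exact: Glin.
  congr pair.
    by rewrite scalerDr scalerA scalerDl addrACA.
  ring.
- move=> p r1 [u [r [t [Gu e1]]]]; case: e1 => -> ->.
  have [t0|t0|->] := ltgtP t 0; last first.
  + by rewrite scale0r mul0r !addr0; exact: Gdom.
  + have := cle _ _ (goodZ (t^-1) gG Gu) => h.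
    have -> : u + t *: v = t *: (t^-1 *: u + v).
      by rewrite scalerDr scalerA mulfV ?gt_eqF // scale1r.
    rewrite normrZ gtr0_norm //.
    have := ler_wpM2l (ltW t0) h.
    rewrite mulrBr mulrA mulfV ?gt_eqF // mul1r; lra.
  + have nt0 : 0 < - t by rewrite oppr_gt0.
    have := cge _ _ (goodZ ((- t)^-1) gG Gu) => h.
    have -> : u + t *: v = (- t) *: ((- t)^-1 *: u - v).
      rewrite scalerBr scalerA mulfV ?gt_eqF // scale1r.
      by rewrite scaleNr opprK.
    rewrite normrZ gtr0_norm //.
    have := ler_wpM2l (ltW nt0) h.
    rewrite mulrBr mulrA mulfV ?gt_eqF // mul1r; lra.
Qed.

Lemma hahn_banach (G0 : set (X * R)) : good G0 ->
  exists F : X -> R, [/\ is_linfun F, (forall v, `|F v| <= `|v|) &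
                        forall v r, G0 (v, r) -> F v = r].
Proof.
move=> g0.
pose P := fun G : set (X * R) => good (G `|` G0).
have [A [PA Amax]] : exists A, P A /\ forall B, A `<` B -> ~ P B.
  apply: Zorn_bigcup => F FP Ftot.
  apply: good_union; first by right; case: g0.
  move=> p q [[Gp Fp Gpp]|G0p] [[Gq Fq Gqq]|G0q].
  - case: (Ftot _ _ Fp Fq) => sub.
      exists (Gq `|` G0); split; [exact: FP| |by left; apply: sub|by left].
      by move=> z [Gz|G0z]; [left; exists Gq|right].
    exists (Gp `|` G0); split; [exact: FP| |by left|by left; apply: sub].
    by move=> z [Gz|G0z]; [left; exists Gp|right].
  - exists (Gp `|` G0); split; [exact: FP| |by left|by right].
    by move=> z [Gz|G0z]; [left; exists Gp|right].
  - exists (Gq `|` G0); split; [exact: FP| |by right|by left].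
    by move=> z [Gz|G0z]; [left; exists Gq|right].
  - exists G0; split => //; by move=> z G0z; right.
pose H := A `|` G0.
have gH : good H := PA.
have tot : forall v, exists r, H (v, r).
  move=> v; apply: contrapT => nex.
  have nv : forall r, ~ H (v, r) by move=> r Hr; apply: nex; exists r.
  have [c gc] := ext_good gH nv.
  apply: (Amax (ext H v c)).
    split; first by move=> z Az; apply: ext_sub; left.
    move=> /(_ _ (ext_new v c gH)) Av; apply: (nv c); by left.
  rewrite /P; suff -> : ext H v c `|` G0 = ext H v c by [].
  by apply/setUidPl => z G0z; apply: ext_sub; right.
pose F v := sval (cid (tot v)).
have HF : forall v, H (v, F v) by move=> v; exact: (svalP (cid (tot v))).
case: (gH) => _ Hfun Hlin Hdom.
exists F; split.
- by move=> a x y; apply: (Hfun _ _ _ (HF _) (Hlin a x y _ _ (HF x) (HF y))).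
- move=> v; rewrite ler_norml Hdom ?andbT //.
  have := Hdom _ _ (goodZ (-1) gH (HF v)); rewrite scaleN1r normrN mulN1r.
  by rewrite lerNl.
- by move=> v r G0v; apply: Hfun (HF v) _; right.
Qed.

End HB.
Unset Implicit Arguments.
Theorem theorem4p4 (R : realType) (X : completeNormedModType R) (k : nat)
  (Y : set X) :
  (1 <= k)%N -> is_subspace Y -> closed Y -> proximinal Y ->
  (k_Chebyshev Y k <->
   (forall (g : X -> R) (x : X), annihilator_sphere Y g -> Sface g x ->
      set_dim_lt (set_shift (Sface g) x `&` Y) k)).
Proof.
move=> k1 HY _ prox.
have distlb : forall x y, Y y -> dist_to Y x <= `|x - y|.
  move=> x y Yy; apply: ge_inf; last by exists y.
  by exists 0 => _ [z _ <-].
split.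
- move=> [_ hP] g x [[gdual gY] gn] [xs gx].
  have xs' : `|x| = 1 := xs.
  have gb : forall v, g v <= `|v|.
    move=> v; apply: le_trans (ler_norm _) _.
    by have := dual_bound v gdual; rewrite gn mul1r.
  have dist1 : dist_to Y x = 1.
    apply/eqP; rewrite eq_le; apply/andP; split.
      by have := distlb x 0 HY.1; rewrite /= ?subr0 xs'.
    apply: lb_le_inf; first by exists `|x - 0|, 0 => //; exact: HY.1.
    move=> _ [y Yy <-].
    by have := gb (x - y); rewrite (linB _ _ gdual.1) (gY y Yy) subr0 gx gn.
  move=> _ [[s [Ss gs] <-] Ya].
  have Ps : metric_proj Y x (x - s).
    split; first by rewrite -opprB; exact: subN.
    by rewrite subKr dist1.
  apply: (span_transfer (c := -1) _ (hP x _ Ps)).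
  move=> _ [z [[s' Ss' <-] Yz] <-].
  exists ((x - s') - (x - s)); split.
    exists (x - s') => //; split.
      by rewrite -opprB; exact: subN.
    by rewrite subKr dist1; case: Ss'.
  by rewrite grp1 scaleN1r opprB grp2.
- move=> hyp; split => // x a [Ya ha].
  have [Yx|Yx] := pselect (Y x).
    have Px : forall p, metric_proj Y x p -> p = x.
      move=> p [Yp hp]; have := distlb x x Yx; rewrite subrr normr0 -hp.
      by rewrite normr_le0 subr_eq0 => /eqP ->.
    apply: (span_transfer (c := 1) _ (span_dim_zero k1)).
    move=> _ [p Pp <-]; exists 0; split => //.
    by rewrite scaler0 (Px _ Pp) (Px a) ?subrr.
  pose d := `|x - a|.
  have d0 : 0 < d.
    rewrite normr_gt0 subr_eq0; apply/eqP => exa; apply: Yx; by rewrite exa.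
  pose G0 := [set q : X * R | exists y t, Y y /\ q = (y + t *: x, t * d)].
  have gG0 : good G0.
    split.
    - by exists 0, 0; split; [exact: HY.1|rewrite scale0r mul0r addr0].
    - move=> v r s [y [t [Yy e1]]] [y' [t' [Yy' e2]]].
      case: e1 => ev ->; case: e2 => ev' ->.
      have E : y + t *: x = y' + t' *: x by rewrite -ev -ev'.
      case: (eqVneq t t') => [->//|ne]; exfalso; apply: Yx.
      have := lin_eq_aux E => E2.
      have -> : x = (t - t')^-1 *: ((t - t') *: x).
        by rewrite scalerA mulVf ?scale1r ?subr_eq0.
      by rewrite E2; apply: subZ => //; apply: subB.
    - move=> c p q r1 r2 [y [t [Yy e1]]] [y' [t' [Yy' e2]]].
      case: e1 => -> ->; case: e2 => -> ->.
      exists (c *: y + y'), (c * t + t'); split; first by case: HY => _; apply.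
      congr pair.
        by rewrite scalerDr scalerA scalerDl addrACA.
      ring.
    - move=> v r [y [t [Yy e1]]]; case: e1 => -> ->.
      have [->|t0] := eqVneq t 0.
        by rewrite scale0r mul0r addr0.
      have -> : y + t *: x = t *: (x - (- (t^-1 *: y))).
        by rewrite opprK scalerDr scalerA mulfV // scale1r addrC.
      rewrite normrZ.
      apply: (le_trans (y := `|t| * d)).
        by rewrite ler_wpM2r ?ler_norm // ltW.
      rewrite ler_wpM2l // /d ha; apply: distlb.
      by apply: subN => //; apply: subZ.
  have [F [lF bF eF]] := hahn_banach gG0.
  have FY : forall y, Y y -> F y = 0.
    move=> y Yy; apply: eF; exists y, 0; split => //.
    by rewrite scale0r addr0 mul0r.
  have Fx : F x = d.
    apply: eF; exists 0, 1; split; first exact: HY.1.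
    by rewrite scale1r add0r mul1r.
  have dn0 : d != 0 by rewrite gt_eqF.
  pose x' := d^-1 *: (x - a).
  have nx' : `|x'| = 1.
    by rewrite normrZ normfV ger0_norm ?ltW // mulVf.
  have Fx' : F x' = 1.
    by rewrite /x' (linZ _ _ lF) (linB _ _ lF) (FY a Ya) subr0 Fx mulVf.
  have dnF : dual_norm F = 1 := dual_norm_one bF nx' Fx'.
  have gsph : annihilator_sphere Y F.
    by split => //; split => //; split => //; exact: bound_cont.
  have Sx' : Sface F x' by split => //; rewrite dnF.
  have H := hyp F x' gsph Sx' 0.
  have {H} := H (conj (ex_intro2 _ _ x' Sx' (subrr x')) HY.1).
  apply: (span_transfer (c := - d)).
  move=> _ [p [Yp hp] <-].
  have dp : `|x - p| = d by rewrite hp -ha.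
  exists (d^-1 *: (a - p)); split.
    exists (d^-1 *: (a - p)); last by rewrite subr0.
    split; last by apply: subZ => //; apply: subB.
    exists (d^-1 *: (x - p)).
      split; first by rewrite /unit_sphere /= normrZ normfV dp ger0_norm ?ltW // mulVf.
      by rewrite dnF (linZ _ _ lF) (linB _ _ lF) (FY p Yp) subr0 Fx mulVf.
    by rewrite /x' -scalerBr grp2.
  by rewrite scalerA mulNr mulfV // scaleN1r opprB.
Qed.
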